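(* Let $K\ge2$, $E=[-1,1]^K$, $\theta$ the uniform probability measure on $[-1,1]$, and $\Phi:E\to[0,\Phi^*]$ measurable. Let $\pi$ be the probability density on $E$ with respect to $\bigotimes_{i=1}^K\theta(du_i)$ given by $\pi(u)=\exp\{-\Phi(u)\}/\int_E\exp\{-\Phi(v)\}\bigotimes_i\theta(dv_i)$. Let $k\in\mathbb{N}$, $k<K$, and let $a_1,\dots,a_k$ be a partition of $\{1,\dots,K\}$ into disjoint nonempty subsets. Define the (deterministic-scan) Gibbs kernel $$M(u,du')=\Big(\prod_{j=1}^k\pi(u'_{a_j}\mid u'_{a_1:a_{j-1}},u_{a_{j+1}:a_k})\Big)\bigotimes_{i=1}^K\theta(du'_i),$$ where $\pi(u'_{a_j}\mid u'_{a_1:a_{j-1}},u_{a_{j+1}:a_k})=\pi(u'_{a_1:a_j},u_{a_{j+1}:a_k})\big/\int_{[-1,1]^{|a_j|}}\pi(u'_{a_1:a_j},u_{a_{j+1}:a_k})\bigotimes_{i\in a_j}\theta(du'_i)$. Then for all $u,\tilde u\in E$, $$M(\tilde u,du')\ge\exp\{-2\Phi^*(k-1)\}\,M(u,du').$$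
   Context: Notation $u_{a_1:a_{j-1}}$ denotes the coordinates of $u$ with indices in $a_1\cup\dots\cup a_{j-1}$, and $(u'_{a_1:a_j},u_{a_{j+1}:a_k})$ denotes the point of $E$ whose coordinates in $a_1\cup\cdots\cup a_j$ are taken from $u'$ and the remaining ones from $u$. *)

(* Defs.v *)
From HB Require Import structures.
From mathcomp Require Import all_boot all_order all_algebra.
From mathcomp Require Import all_classical all_reals all_analysis.
Set Implicit Arguments. Unset Strict Implicit. Unset Printing Implicit Defensive.
Import Order.TTheory GRing.Theory Num.Theory.
Import numFieldNormedType.Exports.
Local Open Scope classical_set_scope.
Local Open Scope ring_scope.

Fact ltN11 (R : realType) : (-1 : R) < 1.
Proof. by rewrite (@lt_trans _ _ 0) ?ltrN10 ?ltr01. Qed.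

Definition theta (R : realType) := uniform_prob (ltN11 R).

Definition cube (R : realType) (K : nat) : set (K.-tuple R) :=
  [set u | forall i : 'I_K, -1 <= tnth u i <= 1].

Definition upd (R : realType) (K : nat) (u : K.-tuple R) (i : 'I_K) (x : R)
  : K.-tuple R := [tuple if j == i then x else tnth u j | j < K].

(* Integration of f w.r.t. (x) _{i in s} theta(du_i), for s a list of
   (distinct) coordinates: the coordinates of u in s are integrated out
   (iterated integrals, which by Tonelli coincide with the integral against
   the product measure since all integrands used are nonnegative); the
   other coordinates are those of u. *)
Definition intco (R : realType) (K : nat) (s : seq 'I_K)
  (f : K.-tuple R -> \bar R) : K.-tuple R -> \bar R :=
  foldr (fun i g => fun u => (\int[@theta R]_x g (upd u i x))%E) f s.

(* Integral over the whole cube E w.r.t. (x)_{i=1}^K theta(du_i)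
   (the base point is irrelevant: every coordinate is integrated out). *)
Definition intE (R : realType) (K : nat) (f : K.-tuple R -> \bar R) : \bar R :=
  intco (enum 'I_K) f [tuple 0 | _ < K].

Definition pidens (R : realType) (K : nat) (Phi : K.-tuple R -> R)
  (u : K.-tuple R) : R :=
  expR (- Phi u) / fine (intE (fun v => (expR (- Phi v))%:E)).

(* (u'_{a_1:a_j}, u_{a_{j+1}:a_k}) : coordinates in a_1 u ... u a_j from u',
   the others from u. *)
Definition mixpt (R : realType) (K k : nat) (a : 'I_k -> {set 'I_K})
  (j : 'I_k) (u' u : K.-tuple R) : K.-tuple R :=
  [tuple if [exists l : 'I_k, (l <= j)%N && (i \in a l)] then tnth u' i
         else tnth u i | i < K].

Definition condens (R : realType) (K k : nat) (Phi : K.-tuple R -> R)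
  (a : 'I_k -> {set 'I_K}) (j : 'I_k) (u' u : K.-tuple R) : R :=
  pidens Phi (mixpt a j u' u) /
  fine (intco (enum (a j)) (fun w => (pidens Phi w)%:E) (mixpt a j u' u)).

Definition gibbs_dens (R : realType) (K k : nat) (Phi : K.-tuple R -> R)
  (a : 'I_k -> {set 'I_K}) (u u' : K.-tuple R) : R :=
  \prod_(j < k) condens Phi a j u' u.

Definition gibbs_kernel (R : realType) (K k : nat) (Phi : K.-tuple R -> R)
  (a : 'I_k -> {set 'I_K}) (u : K.-tuple R) (A : set (K.-tuple R)) : \bar R :=
  intE (fun u' => (gibbs_dens Phi a u u' * \1_A u')%:E).

Arguments cube R K : clear implicits.

(* Main.v *)
Require Import Defs.
From HB Require Import structures.
From mathcomp Require Import all_boot all_order all_algebra.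
From mathcomp Require Import all_classical all_reals all_analysis measurable_realfun.
From mathcomp Require Import ring lra.
Import Order.TTheory GRing.Theory Num.Theory.
Local Open Scope classical_set_scope.
Local Open Scope ring_scope.

Import HBNNSimple.
Section S.
Variable R : realType.
Local Open Scope ereal_scope.

Lemma mono_int d (T : measurableType d) (mu : {measure set T -> \bar R}) (F G : T -> \bar R) :
  (forall x, 0 <= F x) -> (forall x, F x <= G x) ->
  \int[mu]_x F x <= \int[mu]_x G x.
Proof.
move=> F0 FG.
have G0 x : 0 <= G x by apply: le_trans (F0 x) (FG x).
rewrite !ge0_integralTE //; apply: ereal_sup_le => _ [h hF <-].
exists h => //= x; exact: le_trans (hF x) (FG x).
Qed.

Lemma key_int (F G : R -> \bar R) (c : R) : (0 <= c)%R ->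
  (forall x, 0 <= F x) -> (forall x, 0 <= G x) ->
  (forall x, (-1 <= x <= 1)%R -> c%:E * F x <= G x) ->
  c%:E * \int[@theta R]_x F x <= \int[@theta R]_x G x.
Proof.
move=> c0 F0 G0 FG.
have [->|cpos] := eqVneq c 0%R; first by rewrite mul0e integral_ge0.
have cgt0 : (0 < c)%R by rewrite lt0r cpos.
rewrite -lee_pdivlMl // ge0_integralTE //; apply: ge_ereal_sup => _ [h hF <-].
rewrite lee_pdivlMl // -integralT_nnsfun -ge0_integralZl_EFin //; first last.
  exact/measurable_EFinP.
  by move=> x _; rewrite lee_fin.
under eq_integral do rewrite -EFinM.
apply: (@le_trans _ _ (\int[@theta R]_x (c * h x * \1_(`[-1, 1]%classic) x)%R%:E)).
  rewrite /theta !integral_uniform //.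
  all: try (by move=> x; rewrite lee_fin ?indicE; (try case: (_ \in _)); rewrite ?mulr1 ?mulr0 ?mulr_ge0).
  all: try (by apply/measurable_EFinP; repeat apply: measurable_funM).
  - rewrite lee_pmul2l ?lte_fin ?invr_gt0 ?subr_gt0 ?ltN11 //.
    rewrite le_eqVlt; apply/orP; left; apply/eqP; apply: eq_integral => x.
    by rewrite inE => xD; rewrite indicE mem_set // mulr1.
apply: mono_int => x; first by rewrite lee_fin !mulr_ge0 // indicE; case: (_ \in _).
rewrite indicE; case: (boolP (x \in _)) => xD; last by rewrite mulr0 G0.
rewrite mulr1 EFinM; apply: le_trans (FG x _); last first.
  by move: xD; rewrite inE /= in_itv.
by rewrite lee_pmul2l // lte_fin.
Qed.
End S.
Lemma ratio_bounds (R : realType) (A B p q : R) : 0 < A ->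
  A <= p <= B -> A <= q <= B -> A / B <= p / q <= B / A.
Proof.
move=> A0 /andP[Ap pB] /andP[Aq qB].
have B0 : 0 < B by apply: lt_le_trans A0 (le_trans Ap pB).
have q0 : 0 < q by apply: lt_le_trans A0 Aq.
apply/andP; split.
  rewrite ler_pdivrMr // mulrAC ler_pdivlMr //; nra.
rewrite ler_pdivrMr // mulrAC ler_pdivlMr //; nra.
Qed.

Lemma exp_sq (R : realType) (x : R) : expR (- (2 * x)) = expR (- x) ^+ 2.
Proof. by rewrite -expRM_natl mulrN. Qed.

Lemma exp_pow (R : realType) (x : R) (n : nat) :
  expR (- (2 * x * ((n.+1)%:R - 1))) = (expR (- x) ^+ 2) ^+ n.
Proof.
rewrite -exp_sq -expRM_natl; congr expR.
rewrite -natr1; ring.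
Qed.

Section Intco.
Variables (R : realType) (K : nat).
Local Open Scope ereal_scope.

Lemma cube_upd (v : K.-tuple R) i x : cube R K v -> (-1 <= x <= 1)%R ->
  cube R K (upd v i x).
Proof.
move=> cv hx j; rewrite /upd tnth_mktuple; case: (j == i) => //; exact: cv.
Qed.

Lemma intco_ge0 (s : seq 'I_K) (f : K.-tuple R -> \bar R) : (forall v, 0 <= f v) ->
  forall v, 0 <= intco s f v.
Proof.
move=> f0; elim: s => [|i s IH] v /=; first exact: f0.
by apply: integral_ge0 => x _; exact: IH.
Qed.

Lemma intco_key (s : seq 'I_K) (f g : K.-tuple R -> \bar R) (c : R) : (0 <= c)%R ->
  (forall v, 0 <= f v) -> (forall v, 0 <= g v) ->
  (forall v, cube R K v -> c%:E * f v <= g v) ->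
  forall v, cube R K v -> c%:E * intco s f v <= intco s g v.
Proof.
move=> c0 f0 g0 fg; elim: s => [|i s IH] v cv /=; first exact: fg.
apply: key_int => //; [move=> x; exact: intco_ge0|move=> x; exact: intco_ge0|].
by move=> x hx; apply: IH; exact: cube_upd.
Qed.

Lemma intco_cst (s : seq 'I_K) (r : R) v : intco s (fun _ => r%:E) v = r%:E.
Proof.
elim: s v => [|i s IH] v //=.
under eq_integral do rewrite IH.
rewrite integral_cst //=. rewrite /uniform_prob integral_uniform_pdf1 ?mule1 //; exact: ltN11.
Qed.

Lemma intco_lo (s : seq 'I_K) (f : K.-tuple R -> \bar R) (lo : R) : (0 <= lo)%R ->
  (forall v, 0 <= f v) -> (forall v, cube R K v -> lo%:E <= f v) ->
  forall v, cube R K v -> lo%:E <= intco s f v.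
Proof.
move=> lo0 f0 hf v cv.
have H := @intco_key s (fun _ => 1%:E) f lo lo0 (fun _ => lee01) f0.
rewrite -[lo%:E]mule1 -(intco_cst s 1 v); apply: H => // w cw; rewrite mule1; exact: hf.
Qed.

Lemma intco_hi (s : seq 'I_K) (f : K.-tuple R -> \bar R) (hi : R) : (0 <= hi)%R ->
  (forall v, 0 <= f v) -> (forall v, cube R K v -> f v <= hi%:E) ->
  forall v, cube R K v -> intco s f v <= hi%:E.
Proof.
move=> hi0 f0 hf v cv.
have H := @intco_key s f (fun _ => hi%:E) 1 ler01 f0 (fun _ => hi0).
rewrite -[intco s f v]mul1e -(intco_cst s hi v); apply: H => // w cw; rewrite mul1e; exact: hf.
Qed.
End Intco.

Theorem proposition4p3 (R : realType) (K : nat) (hK : (2 <= K)%N)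
  (Phi : K.-tuple R -> R) (Phistar : R)
  (hPhimeas : measurable_fun (cube R K) Phi)
  (hPhibd : forall u, cube R K u -> 0 <= Phi u <= Phistar)
  (k : nat) (hk : (k < K)%N) (a : 'I_k -> {set 'I_K})
  (ha_ne : forall j, (0 < #|a j|)%N)
  (ha_disj : forall (j l : 'I_k) (i : 'I_K), i \in a j -> i \in a l -> j = l)
  (ha_cov : forall i : 'I_K, exists j, i \in a j) :
  forall u ut : K.-tuple R, cube R K u -> cube R K ut ->
  forall A : set (K.-tuple R), measurable A ->
    ((expR (- (2 * Phistar * (k%:R - 1))))%:E * gibbs_kernel Phi a u A
       <= gibbs_kernel Phi a ut A)%E.
Proof.
move=> u ut cu cut A mA.
pose c0 := expR (- Phistar).
have c0pos : 0 < c0 by apply: expR_gt0.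
have cube0 : cube R K [tuple 0 | _ < K].
  by move=> i; rewrite tnth_mktuple lerN10 ler01.
have ePhi_lo : forall v, cube R K v -> c0 <= expR (- Phi v).
  move=> v cv; rewrite /c0 ler_expR lerN2.
  by case/andP: (hPhibd v cv).
have ePhi_hi : forall v, cube R K v -> expR (- Phi v) <= 1.
  move=> v cv; rewrite -expR0 ler_expR oppr_le0.
  by case/andP: (hPhibd v cv).
have Ilo : (c0%:E <= intE (fun v => (expR (- Phi v))%:E))%E.
  apply: intco_lo; [exact: ltW|by move=> v; rewrite lee_fin expR_ge0| |done].
  by move=> v cv; rewrite lee_fin; exact: ePhi_lo.
have Ihi : (intE (fun v => (expR (- Phi v))%:E) <= 1%:E)%E.
  apply: intco_hi; [exact: ler01|by move=> v; rewrite lee_fin expR_ge0| |done].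
  by move=> v cv; rewrite lee_fin; exact: ePhi_hi.
have Ifin : intE (fun v => (expR (- Phi v))%:E) \is a fin_num.
  rewrite ge0_fin_numE; last by apply: le_trans Ilo; rewrite lee_fin ltW.
  exact: le_lt_trans Ihi (ltry _).
pose Z := fine (intE (fun v => (expR (- Phi v))%:E)).
have Zlo : c0 <= Z by rewrite -lee_fin /Z fineK.
have Zpos : 0 < Z by apply: lt_le_trans Zlo.
have pid0 : forall v, 0 <= pidens Phi v.
  move=> v; rewrite /pidens divr_ge0 ?expR_ge0 //; exact: ltW.
have pid_b : forall v, cube R K v -> c0 / Z <= pidens Phi v <= 1 / Z.
  move=> v cv; rewrite /pidens -/Z !ler_pM2r ?invr_gt0 //.
  by rewrite ePhi_lo // ePhi_hi.
have den_b : forall j v, cube R K v ->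
    c0 / Z <= fine (intco (enum (a j)) (fun w => (pidens Phi w)%:E) v) <= 1 / Z.
  move=> j v cv.
  have hlo : ((c0 / Z)%:E <= intco (enum (a j)) (fun w => (pidens Phi w)%:E) v)%E.
    apply: intco_lo; [by rewrite divr_ge0 // ltW|by move=> w; rewrite lee_fin| |done].
    by move=> w cw; rewrite lee_fin; case/andP: (pid_b w cw).
  have hhi : (intco (enum (a j)) (fun w => (pidens Phi w)%:E) v <= (1 / Z)%:E)%E.
    apply: intco_hi; [by rewrite divr_ge0 // ltW|by move=> w; rewrite lee_fin| |done].
    by move=> w cw; rewrite lee_fin; case/andP: (pid_b w cw).
  have hfin : intco (enum (a j)) (fun w => (pidens Phi w)%:E) v \is a fin_num.
    rewrite ge0_fin_numE; last by apply: le_trans hlo; rewrite lee_fin divr_ge0 // ltW.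
    exact: le_lt_trans hhi (ltry _).
  by rewrite -!lee_fin fineK // hlo hhi.
have mix_cube : forall j u' v, cube R K u' -> cube R K v -> cube R K (mixpt a j u' v).
  move=> j u' v cu' cv i; rewrite /mixpt tnth_mktuple.
  by case: ifP => _; [exact: cu'|exact: cv].
have cond0 : forall j u' v, 0 <= condens Phi a j u' v.
  move=> j u' v; rewrite /condens divr_ge0 // fine_ge0 //.
  by apply: intco_ge0 => w; rewrite lee_fin.
have cond_b : forall j u' v, cube R K u' -> cube R K v ->
    c0 <= condens Phi a j u' v <= 1 / c0.
  move=> j u' v cu' cv.
  have AZ : 0 < c0 / Z by rewrite divr_gt0.
  have := @ratio_bounds R _ _ _ _ AZ (pid_b _ (mix_cube j u' v cu' cv)) (den_b j _ (mix_cube j u' v cu' cv)).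
  have -> : c0 / Z / (1 / Z) = c0 by field; rewrite gt_eqF.
  have -> : 1 / Z / (c0 / Z) = 1 / c0 by field; rewrite !gt_eqF.
  by [].
destruct k as [|k'].
  have K0 : (0 < K)%N by apply: leq_trans hK.
  by have [[]] := ha_cov (Ordinal K0).
rewrite exp_pow /gibbs_kernel /intE.
apply: intco_key => //.
- by move=> v; rewrite lee_fin mulr_ge0 ?prodr_ge0 // indicE; case: (_ \in _).
- by move=> v; rewrite lee_fin mulr_ge0 ?prodr_ge0 // indicE; case: (_ \in _).
move=> v cv; rewrite -EFinM lee_fin mulrA ler_wpM2r //.
have mixlast : forall w, mixpt a ord_max v w = v.
  move=> w; apply: eq_from_tnth => i; rewrite tnth_mktuple.
  have [l hl] := ha_cov i; case: ifP => // /negbT/existsPn/(_ l).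
  by rewrite hl andbT -ltnS ltn_ord.
rewrite /gibbs_dens !big_ord_recr /=.
have -> : condens Phi a ord_max v ut = condens Phi a ord_max v u.
  by rewrite /condens !mixlast.
rewrite mulrA ler_wpM2r //.
have -> : (expR (- Phistar) ^+ 2) ^+ k' = \prod_(i < k') expR (- Phistar) ^+ 2.
  by rewrite prodr_const card_ord.
rewrite -big_split /=; apply: ler_prod => i _.
rewrite mulr_ge0 ?exprn_ge0 ?expR_ge0 //=.
have /andP[lo _] := cond_b (widen_ord (leqnSn k') i) v ut cv cut.
have /andP[_ hi] := cond_b (widen_ord (leqnSn k') i) v u cv cu.
apply: le_trans lo; rewrite -/c0.
apply: (@le_trans _ _ (c0 ^+ 2 * (1 / c0))); first by rewrite ler_wpM2l ?exprn_ge0 // ltW.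
by rewrite expr2 -mulrA mul1r mulfV ?mulr1 // gt_eqF.
Qed.
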